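(* Let $\Omega\subset\mathbb{R}^3$ be a MAC compatible bounded domain, $(\mathcal M,\mathcal E)$ a MAC grid, $\varrho\in L_{\mathcal M}$, $\boldsymbol u=(u_1,u_2,u_3)\in\mathbf H_{\mathcal E,0}$, $i\in\{1,2,3\}$ and $\varphi=(\varphi_\sigma)\in H^{(i)}_{\mathcal E,0}$. With the primal fluxes $F_{K,\sigma}$ and dual fluxes $F_{\sigma,\varepsilon}$ defined from $(\varrho,\boldsymbol u)$ as in the context, $$\sum_{\sigma\in\mathcal E^{(i)}_{\rm int}}\ \sum_{\varepsilon\text{ face of }D_\sigma}F_{\sigma,\varepsilon}u_\varepsilon\varphi_\sigma=\sum_{j=1}^3S_j,$$ where $$S_i=\sum_{K=[\overrightarrow{\sigma\sigma'}],\ \sigma,\sigma'\in\mathcal E^{(i)}}\big(\varrho^{\rm up}_\sigma u_\sigma|D_{K,\sigma}|+\varrho^{\rm up}_{\sigma'}u_{\sigma'}|D_{K,\sigma'}|\big)(\mathcal R^{(i)}_{\mathcal M}u_i)_K\,\frac{\varphi_\sigma-\varphi_{\sigma'}}{d(\boldsymbol x_\sigma,\boldsymbol x_{\sigma'})},$$ and, for $j\neq i$, $$S_j=\sum_{\tau\in\mathcal E^{(j)}_{\rm int}}|D_\tau|\frac{\varrho^{\rm up}_\tau u_\tau}{4}\Big[(u_{\sigma_3}+u_{\sigma_1})\frac{\varphi_{\sigma_3}-\varphi_{\sigma_1}}{d(\boldsymbol x_{\sigma_1},\boldsymbol x_{\sigma_3})}+(u_{\sigma_4}+u_{\sigma_2})\frac{\varphi_{\sigma_4}-\varphi_{\sigma_2}}{d(\boldsymbol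 x_{\sigma_2},\boldsymbol x_{\sigma_4})}\Big],$$ where $\sigma_1,\dots,\sigma_4$ are the four faces of $\mathcal E^{(i)}$ neighbouring $\tau$ (i.e. the faces in $\mathcal E^{(i)}$ of the two cells sharing $\tau$), labelled so that $\boldsymbol x_{\sigma_1}-\boldsymbol x_{\sigma_3}=\boldsymbol x_{\sigma_2}-\boldsymbol x_{\sigma_4}=\beta\boldsymbol e_j$ for some $\beta>0$.
   Context: MAC compatible domain: bounded connected open $\Omega$ whose closure is a finite union of closed rectangular parallelepipeds with faces orthogonal to $\boldsymbol e_1,\boldsymbol e_2,\boldsymbol e_3$. MAC grid $(\mathcal M,\mathcal E)$: structured partition $\mathcal M$ of $\Omega$ into rectangular parallelepipeds $K$; faces $\mathcal E$, $\mathcal E(K)$ the faces of $K$, $\mathcal E^{(i)}$ (resp. $\mathcal E^{(i)}_{\rm int}$) the (interior) faces orthogonal to $\boldsymbol e_i$; $\sigma=K|L$ common face; $\boldsymbol x_\sigma$ face mass centre; $d(\cdot,\cdot)$ Euclidean distance. $K=[\overrightarrow{\sigma\sigma'}]$ means $\sigma,\sigma'\in\mathcal E^{(i)}\cap\mathcal E(K)$ with $(\boldsymbol x_{\sigma'}-\boldsymbol x_\sigma)\cdot\boldsymbol e_i>0$. $D_{K,\sigma}$ is the half of $K$ adjacent to $\sigma$; dual cells $D_\sigma=D_{K,\sigma}\cup D_{L,\sigma}$ for $\sigma=K|L$, $D_{K,\sigma}$ for boundary $\sigma$; dual faces $\varepsilon=\sigma|\sigma'$ separate $D_\sigma,D_{\sigma'}$.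 $L_{\mathcal M}$: piecewise constants on cells (values $\varrho_K$); $H^{(i)}_{\mathcal E,0}$: piecewise constants on $D_\sigma$, $\sigma\in\mathcal E^{(i)}$ (values $u_\sigma$), vanishing for boundary $\sigma$; $\mathbf H_{\mathcal E,0}=\prod_iH^{(i)}_{\mathcal E,0}$; for $\tau\in\mathcal E^{(j)}$, $u_\tau$ denotes the value of $u_j$ on $D_\tau$. Fluxes: $u_{K,\sigma}=u_\sigma\boldsymbol e_i\cdot\boldsymbol n_{K,\sigma}$ for $\sigma\in\mathcal E^{(i)}\cap\mathcal E(K)$; $F_{K,\sigma}=|\sigma|\varrho^{\rm up}_\sigma u_{K,\sigma}$ with $\varrho^{\rm up}_\sigma=\varrho_K$ if $u_{K,\sigma}\ge0$ and $\varrho_L$ otherwise ($\sigma=K|L$), and $F_{K,\sigma}=0$ on boundary faces. Dual fluxes for $\sigma=K|L\in\mathcal E^{(i)}_{\rm int}$: if $\varepsilon=\sigma|\sigma'\subset K$ is orthogonal to $\boldsymbol e_i$ then $F_{\sigma,\varepsilon}=\frac12[F_{K,\sigma}\boldsymbol n_{K,\sigma}+F_{K,\sigma'}\boldsymbol n_{K,\sigma'}]\cdot\boldsymbol n_{D_\sigma,\varepsilon}$; if $\varepsilon$ is orthogonal to $\boldsymbol e_j$, $j\neq i$, and $\varepsilon\subset\tau\cup\tau'$ with $\tau\in\mathcal E(K)$, $\tau'\in\mathcal E(L)$, then $F_{\sigma,\varepsilon}=\frac12(F_{K,\tau}+F_{L,\tau'})$; fluxes through dual faces on $\partial\Omega$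 are zero. $u_\varepsilon=\frac12(u_\sigma+u_{\sigma'})$ for $\varepsilon=\sigma|\sigma'$ interior. $(\mathcal R^{(i)}_{\mathcal M}u_i)_K=\frac12\sum_{\sigma\in\mathcal E^{(i)}\cap\mathcal E(K)}u_\sigma$. *)

(* Defs.v *)
From HB Require Import structures.
From mathcomp Require Import all_boot all_order all_algebra.
From mathcomp Require Import reals.
Set Implicit Arguments. Unset Strict Implicit. Unset Printing Implicit Defensive.
Import Order.TTheory GRing.Theory Num.Theory.
Local Open Scope ring_scope.

Definition idx := (nat * nat * nat)%type.

Definition coord (k : idx) (j : 'I_3) : nat :=
  match val j with 0 => k.1.1 | 1 => k.1.2 | _ => k.2 end.
Definition setc (k : idx) (j : 'I_3) (n : nat) : idx :=
  match val j with
  | 0 => (n, k.1.2, k.2) | 1 => (k.1.1, n, k.2) | _ => (k.1.1, k.1.2, n) end.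
(* k + e_j and k - e_j (the latter truncated at 0; only used when coord k j > 0
   or in a position where the truncation is irrelevant) *)
Definition nxt (k : idx) (j : 'I_3) : idx := setc k j (coord k j).+1.
Definition prv (k : idx) (j : 'I_3) : idx := setc k j (coord k j).-1.

Definition adjc (a b : idx) : bool :=
  [exists j : 'I_3, (b == nxt a j) || (a == nxt b j)].

(* A MAC grid on a MAC compatible domain: the (interior of the) union of a set
   of cells of a tensor grid with nodes  xc j 0 < xc j 1 < ... < xc j (N j)
   in direction e_j.  Cell k = prod_j [xc j k_j, xc j (k_j+1)]; inM k says the
   cell belongs to the partition M.  Connectedness of Omega = connectedness of
   the cells through common faces. *)
Record MACgrid (R : realType) := {
  N : 'I_3 -> nat;
  xc : 'I_3 -> nat -> R;
  inM : idx -> bool;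
  xc_incr : forall j n, (n < N j)%N -> xc j n < xc j n.+1;
  inM_bound : forall k, inM k -> forall j, (coord k j < N j)%N;
  inM_conn : forall a b, inM a -> inM b ->
    exists p : seq idx, [&& all inM p, path adjc a p & last a p == b]
}.

Definition i0 : 'I_3 := @Ordinal 3 0 isT.
Definition i1 : 'I_3 := @Ordinal 3 1 isT.
Definition i2 : 'I_3 := @Ordinal 3 2 isT.

Section MAC.
Variable R : realType.
Variable g : MACgrid R.

Definition hstep (j : 'I_3) (n : nat) : R := xc g j n.+1 - xc g j n.
Definition vol (k : idx) : R := \prod_(m < 3) hstep m (coord k m).
Definition volD (k : idx) : R := vol k / 2.

(* Faces orthogonal to e_j are indexed by f : idx: the face at abscissa
   xc j (coord f j) whose adjacent cells are prv f j (the "left" cell, on the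
   -e_j side) and f (the "right" cell).  Cell K has e_j-faces K (left face)
   and nxt K j (right face), so K = [->(K, nxt K j)] in direction j. *)
Definition area (j : 'I_3) (f : idx) : R :=
  \prod_(m < 3 | m != j) hstep m (coord f m).
Definition xface (j : 'I_3) (f : idx) : 'I_3 -> R := fun m =>
  if m == j then xc g j (coord f j)
  else (xc g m (coord f m) + xc g m (coord f m).+1) / 2.
Definition dist (p q : 'I_3 -> R) : R := Num.sqrt (\sum_(m < 3) (p m - q m) ^+ 2).

Definition inEf (j : 'I_3) (f : idx) : bool :=
  ((0 < coord f j)%N && inM g (prv f j)) || inM g f.
Definition isInt (j : 'I_3) (f : idx) : bool :=
  [&& (0 < coord f j)%N, inM g (prv f j) & inM g f].
Definition isBnd (j : 'I_3) (f : idx) : bool := inEf j f && ~~ isInt j f.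

Definition sumI (P : pred idx) (F : idx -> R) : R :=
  \sum_(a < (N g i0).+1) \sum_(b < (N g i1).+1)
    \sum_(c < (N g i2).+1 | P (a : nat, b : nat, c : nat)) F (a : nat, b : nat, c : nat).

(* outward normal of K on its e_j-face of side s (true = +e_j side) *)
Definition sgn (s : bool) : R := if s then 1 else -1.
Definition faceof (K : idx) (j : 'I_3) (s : bool) : idx := if s then nxt K j else K.
Definition nbr (K : idx) (j : 'I_3) (s : bool) : idx := if s then nxt K j else prv K j.

Variables (rho : idx -> R) (u : 'I_3 -> idx -> R).

(* u_{K,sigma} = u_sigma e_j . n_{K,sigma} *)
Definition uK (K : idx) (j : 'I_3) (s : bool) : R := sgn s * u j (faceof K j s).
Definition FK (K : idx) (j : 'I_3) (s : bool) : R :=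
  let f := faceof K j s in
  if isInt j f then
    area j f * (if 0 <= uK K j s then rho K else rho (nbr K j s)) * uK K j s
  else 0.
(* upwind density rho^up_sigma of sigma = K|L, K = left cell, so that
   u_{K,sigma} = u_sigma *)
Definition rhoup (j : 'I_3) (f : idx) : R :=
  if 0 <= u j f then rho (prv f j) else rho f.

Variables (i : 'I_3) (phi : idx -> R).

(* dual flux through the e_i-orthogonal dual face of D_sigma lying in the cell C
   (on side s of D_sigma) :
   1/2 [F_{C,sigma} n_{C,sigma} + F_{C,sigma'} n_{C,sigma'}] . n_{D_sigma,eps} *)
Definition FdualI (C : idx) (s : bool) : R :=
  (FK C i (~~ s) * sgn (~~ s) + FK C i s * sgn s) / 2 * sgn s.

Definition dualsum : R :=
  sumI (isInt i) (fun f =>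
    let K := prv f i in let L := f in
    ( FdualI K false * ((u i f + u i (prv f i)) / 2)
    + FdualI L true * ((u i f + u i (nxt f i)) / 2)
    + \sum_(j < 3 | j != i) \sum_(s : bool)
        (FK K j s + FK L j s) / 2 * ((u i f + u i (nbr f j s)) / 2))
    * phi f).

Definition Si : R :=
  sumI (inM g) (fun K =>
    let s := K in let s' := nxt K i in
    (rhoup i s * u i s * volD K + rhoup i s' * u i s' * volD K)
    * ((u i s + u i s') / 2)
    * ((phi s - phi s') / dist (xface i s) (xface i s'))).

(* S_j, j <> i : tau = (j,t) interior, cells prv t j (left) and t (right);
   sigma_1 = t, sigma_3 = prv t j, sigma_2 = nxt t i, sigma_4 = nxt (prv t j) i,
   so that x_{sigma_1} - x_{sigma_3} = x_{sigma_2} - x_{sigma_4} = beta e_j, beta>0 *)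
Definition Sj (j : 'I_3) : R :=
  sumI (isInt j) (fun t =>
    let c1 := prv t j in let c2 := t in
    let s1 := c2 in let s3 := c1 in let s2 := nxt c2 i in let s4 := nxt c1 i in
    (volD c1 + volD c2) * (rhoup j t * u j t / 4) *
    ( (u i s3 + u i s1) * ((phi s3 - phi s1) / dist (xface i s1) (xface i s3))
    + (u i s4 + u i s2) * ((phi s4 - phi s2) / dist (xface i s2) (xface i s4)))).

Definition Sdir (j : 'I_3) : R := if j == i then Si else Sj j.

End MAC.

(* Main.v *)
Require Import Defs.
From HB Require Import structures.
From mathcomp Require Import all_boot all_order all_algebra.
From mathcomp Require Import reals.
From mathcomp Require Import ring lra.
Import Order.TTheory GRing.Theory Num.Theory.
Set Implicit Arguments. Unset Strict Implicit.
Local Open Scope ring_scope.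
Local Notation coord := Defs.coord.

Lemma coord_setc k j n m : coord (setc k j n) m = if m == j then n else coord k m.
Proof.
case: k => [[a b] c]; case: j => [[|[|[|j]]] hj]; case: m => [[|[|[|m]]] hm] //=.
Qed.

Lemma coord_nxt k j m : coord (nxt k j) m = if m == j then (coord k j).+1 else coord k m.
Proof. exact: coord_setc. Qed.
Lemma coord_prv k j m : coord (prv k j) m = if m == j then (coord k j).-1 else coord k m.
Proof. exact: coord_setc. Qed.

Lemma idx_ext a b : (forall m, coord a m = coord b m) -> a = b.
Proof.
case: a => [[a1 a2] a3]; case: b => [[b1 b2] b3] H.
have := H i0; have := H i1; have := H i2; rewrite /coord /= => -> -> -> //.
Qed.

Lemma prv_nxt k j : prv (nxt k j) j = k.
Proof. apply: idx_ext => m; rewrite coord_prv !coord_nxt; case: eqP => // ->; by rewrite eqxx. Qed.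

Lemma nxt_prv k j : (0 < coord k j)%N -> nxt (prv k j) j = k.
Proof.
move=> h; apply: idx_ext => m; rewrite coord_nxt !coord_prv; case: eqP => // ->.
by rewrite eqxx prednK.
Qed.

Lemma nxt_prv_comm k i j : j != i -> nxt (prv k j) i = prv (nxt k i) j.
Proof.
move=> hji; apply: idx_ext => m; rewrite coord_nxt !coord_prv !coord_nxt.
case: (eqVneq m i) => [->|hmi]; first by rewrite eq_sym (negbTE hji).
by case: (m == j); rewrite // (negbTE hji).
Qed.

Lemma nxt_nxt_comm k i j : nxt (nxt k j) i = nxt (nxt k i) j.
Proof.
apply: idx_ext => m; rewrite !coord_nxt.
case: (eqVneq i j) => [->|hij] //.
case: (eqVneq m i) => [->|hmi]; last by [].
by rewrite (negbTE hij).
Qed.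

Lemma sum_shift1 (R : realType) (h : nat -> R) n :
  h 0%N = 0 -> h n.+1 = 0 -> \sum_(a < n.+1) h a.+1 = \sum_(a < n.+1) h a.
Proof.
move=> h0 hn; rewrite big_ord_recr /= hn addr0 big_ord_recl /= h0 add0r.
by apply: eq_bigr.
Qed.

Section Main.
Variables (R : realType) (g : MACgrid R).

Definition bsum (F : idx -> R) : R := sumI g (fun _ => true) F.

Lemma sumI_mk P F : sumI g P F = bsum (fun k => if P k then F k else 0).
Proof. rewrite /bsum /sumI; apply: eq_bigr => a _; apply: eq_bigr => b _; exact: big_mkcond. Qed.

Lemma bsum_ext F G : (forall k, F k = G k) -> bsum F = bsum G.
Proof. move=> H; rewrite /bsum /sumI; apply: eq_bigr => a _; apply: eq_bigr => b _; apply: eq_bigr => c _; exact: H. Qed.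

Lemma bsumD F G : bsum (fun k => F k + G k) = bsum F + bsum G.
Proof. rewrite /bsum /sumI -big_split; apply: eq_bigr => a _; rewrite -big_split; apply: eq_bigr => b _; exact: big_split. Qed.

Lemma bsum_sum (I : Type) (r : seq I) (P : pred I) (F : I -> idx -> R) :
  bsum (fun k => \sum_(x <- r | P x) F x k) = \sum_(x <- r | P x) bsum (F x).
Proof.
rewrite /bsum /sumI.
under eq_bigr => a _ do under eq_bigr => b _ do rewrite exchange_big.
under eq_bigr => a _ do rewrite exchange_big.
by rewrite exchange_big.
Qed.

Lemma ord3_cases (j : 'I_3) : [\/ j = i0, j = i1 | j = i2].
Proof.
case: j => [[|[|[|j]]] hj] //; [apply: Or31|apply: Or32|apply: Or33]; exact: val_inj.
Qed.

Lemma bsum_shift j (G : idx -> R) :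
  (forall k, coord k j = 0%N -> G k = 0) ->
  (forall k, coord k j = N g j -> G (nxt k j) = 0) ->
  bsum (fun k => G (nxt k j)) = bsum G.
Proof.
move=> H0 HN; rewrite /bsum /sumI.
case: (ord3_cases j) => -> in H0 HN *.
- rewrite /nxt /setc /coord /= in HN *.
  have := (@sum_shift1 R (fun a => \sum_(b < (N g i1).+1) \sum_(c < (N g i2).+1) G (a, b : nat, c : nat)) (N g i0)); apply.
  + by apply: big1 => b _; apply: big1 => c _; apply: H0.
  + apply: big1 => b _; apply: big1 => c _; exact: (HN (N g i0, b : nat, c : nat)).
- rewrite /nxt /setc /coord /= in HN *; apply: eq_bigr => a _.
  have := (@sum_shift1 R (fun b => \sum_(c < (N g i2).+1) G (a : nat, b, c : nat)) (N g i1)); apply.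
  + by apply: big1 => c _; apply: H0.
  + apply: big1 => c _; exact: (HN (a : nat, N g i1, c : nat)).
- rewrite /nxt /setc /coord /= in HN *; apply: eq_bigr => a _; apply: eq_bigr => b _.
  have := (@sum_shift1 R (fun c => G (a : nat, b : nat, c)) (N g i2)); apply.
  + by apply: H0.
  + exact: (HN (a : nat, b : nat, N g i2)).
Qed.

Variables (rho : idx -> R) (u : 'I_3 -> idx -> R) (i : 'I_3) (phi : idx -> R).
Hypothesis hu : forall (j : 'I_3) (f : idx), isBnd g j f -> u j f = 0.
Hypothesis hphi : forall f : idx, isBnd g i f -> phi f = 0.

Lemma bnd_M j f : inM g f -> ~~ isInt g j f -> isBnd g j f.
Proof. by move=> hM hI; rewrite /isBnd /inEf hM orbT. Qed.

Lemma bnd_prvM j f : (0 < coord f j)%N -> inM g (prv f j) -> ~~ isInt g j f -> isBnd g j f.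
Proof. by move=> h0 hM hI; rewrite /isBnd /inEf h0 hM. Qed.

Lemma isInt_nxt j c : isInt g j (nxt c j) = inM g c && inM g (nxt c j).
Proof. by rewrite /isInt coord_nxt eqxx prv_nxt. Qed.

Lemma isInt_M j f : isInt g j f -> inM g f.
Proof. by case/and3P. Qed.

Lemma area_eq j a b : (forall m, m != j -> coord a m = coord b m) -> area g j a = area g j b.
Proof. by move=> H; rewrite /area; apply: eq_bigr => m hm; rewrite H. Qed.

Lemma area_nxt j c : area g j (nxt c j) = area g j c.
Proof. by apply: area_eq => m hm; rewrite coord_nxt (negbTE hm). Qed.

Lemma area_prv j c : area g j (prv c j) = area g j c.
Proof. by apply: area_eq => m hm; rewrite coord_prv (negbTE hm). Qed.

Lemma vol_area j k : vol g k = hstep g j (coord k j) * area g j k.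
Proof. by rewrite /vol (bigD1 j). Qed.

Lemma hstep_gt0 j n : (n < N g j)%N -> 0 < hstep g j n.
Proof. by move=> h; rewrite /hstep subr_gt0; apply: xc_incr. Qed.

Lemma upw_neg (x a b : R) :
  (if 0 <= - x then a else b) * - x = - ((if 0 <= x then b else a) * x).
Proof.
case: (ltrgtP x 0) => [h|h|->]; last by rewrite oppr0 !mulr0 oppr0.
- by rewrite oppr_ge0 (ltW h) mulrN.
- by rewrite oppr_ge0 (lt_geF h) mulrN.
Qed.

Lemma FK_false c j : FK g rho u c j false =
  if inM g c then - (area g j c * rhoup rho u j c * u j c) else 0.
Proof.
rewrite /FK /faceof /uK /sgn /nbr /rhoup /= mulN1r.
case hI: (isInt g j c).
  by rewrite (isInt_M hI) -mulrA upw_neg mulrN mulrA.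
case hM: (inM g c) => //.
by rewrite hu ?mulr0 ?oppr0 // bnd_M // hI.
Qed.

Lemma FK_true c j : FK g rho u c j true =
  if inM g c then area g j c * rhoup rho u j (nxt c j) * u j (nxt c j) else 0.
Proof.
rewrite /FK /faceof /uK /sgn /nbr /rhoup /= mul1r isInt_nxt prv_nxt area_nxt.
case hM: (inM g c) => //=.
case hM2: (inM g (nxt c j)) => //.
rewrite hu ?mulr0 // bnd_prvM ?coord_nxt ?eqxx ?prv_nxt ?isInt_nxt ?hM ?hM2 //.
Qed.

Lemma dist_single (p q : 'I_3 -> R) j :
  (forall m, m != j -> p m = q m) -> dist p q = `|p j - q j|.
Proof.
move=> H; rewrite /dist (bigD1 j) //= big1 ?addr0 ?sqrtr_sqr // => m hm.
by rewrite H // subrr expr0n.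
Qed.

Lemma xface_neq a b m : m != i -> coord a m = coord b m -> xface g i a m = xface g i b m.
Proof. by move=> hm h; rewrite /xface (negbTE hm) h. Qed.

Lemma dist_i K : inM g K ->
  dist (xface g i K) (xface g i (nxt K i)) = hstep g i (coord K i).
Proof.
move=> hM; rewrite (@dist_single _ _ i).
  rewrite /xface eqxx coord_nxt eqxx -opprB normrN gtr0_norm //.
  exact: hstep_gt0 (inM_bound hM i).
by move=> m hm; apply: xface_neq => //; rewrite coord_nxt (negbTE hm).
Qed.

Lemma dist_j j a b : j != i -> (forall m, m != j -> coord a m = coord b m) ->
  coord a j = (coord b j).+1 -> (coord a j < N g j)%N ->
  dist (xface g i a) (xface g i b) = (hstep g j (coord b j) + hstep g j (coord a j)) / 2.
Proof.
move=> hji H ha hN; rewrite (@dist_single _ _ j).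
  rewrite /xface (negbTE hji) ha /hstep.
  have h1 := hstep_gt0 hN; have h2 : (coord b j < N g j)%N by rewrite -ltnS -ha ltnW.
  have := hstep_gt0 h2; rewrite ha /hstep in h1 * => h2'.
  rewrite ger0_norm; first by field.
  lra.
move=> m hm; case: (eqVneq m i) => [->|hmi]; last by apply: xface_neq => //; rewrite H.
by rewrite /xface eqxx H // eq_sym.
Qed.

Definition X K := (rhoup rho u i K * u i K + rhoup rho u i (nxt K i) * u i (nxt K i))
   * area g i K / 2 * ((u i K + u i (nxt K i)) / 2).

Lemma Si_eq : Si g rho u i phi =
  bsum (fun K => if inM g K then X K * (phi K - phi (nxt K i)) else 0).
Proof.
rewrite /Si sumI_mk; apply: bsum_ext => K; case hM: (inM g K) => //.
rewrite dist_i // /volD (vol_area i K) /X.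
have := hstep_gt0 (inM_bound hM i) => hp.
field; exact: lt0r_neq0.
Qed.

Definition Z j t := area g j t * rhoup rho u j t * u j t / 4.

Lemma Sj_eq j : j != i -> Sj g rho u i phi j =
  bsum (fun t => if isInt g j t then Z j t *
    ((u i (prv t j) + u i t) * (phi (prv t j) - phi t)
   + (u i (nxt (prv t j) i) + u i (nxt t i)) * (phi (nxt (prv t j) i) - phi (nxt t i)))
  else 0).
Proof.
move=> hji; rewrite /Sj sumI_mk; apply: bsum_ext => t; case hI: (isInt g j t) => //.
case/and3P: hI => h0 hM1 hM2.
have hc : coord t j = (coord (prv t j) j).+1 by rewrite coord_prv eqxx prednK.
have hN := inM_bound hM2 j.
rewrite (@dist_j j t (prv t j)) //; last first.
  by move=> m hm; rewrite coord_prv (negbTE hm).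
rewrite (@dist_j j (nxt t i) (nxt (prv t j) i)) //; first last.
- by rewrite coord_nxt (negbTE hji).
- by rewrite !coord_nxt (negbTE hji) coord_prv eqxx prednK.
- have hij : i != j by rewrite eq_sym.
  move=> m hm; rewrite !coord_nxt !coord_prv (negbTE hm) (negbTE hij); by case: (m == i).
rewrite !coord_nxt (negbTE hji).
rewrite /volD (vol_area j (prv t j)) (vol_area j t) area_prv /Z.
have p1 := hstep_gt0 hN.
have p2 : 0 < hstep g j (coord (prv t j) j) by apply: hstep_gt0; rewrite -ltnS -hc ltnW.
field; apply: lt0r_neq0; lra.
Qed.

Definition PA f := if isInt g i f then
  FdualI g rho u i (prv f i) false * ((u i f + u i (prv f i)) / 2) * phi f else 0.
Definition PB f := if isInt g i f then
  FdualI g rho u i f true * ((u i f + u i (nxt f i)) / 2) * phi f else 0.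
Definition PK j s f := if isInt g i f then
  FK g rho u (prv f i) j s / 2 * ((u i f + u i (nbr f j s)) / 2) * phi f else 0.
Definition PL j s f := if isInt g i f then
  FK g rho u f j s / 2 * ((u i f + u i (nbr f j s)) / 2) * phi f else 0.

Lemma dualsum_eq : dualsum g rho u i phi =
  bsum PA + bsum PB + \sum_(j < 3 | j != i)
    (bsum (PK j false) + bsum (PL j false) + bsum (PK j true) + bsum (PL j true)).
Proof.
under eq_bigr do rewrite -!bsumD.
rewrite -bsum_sum -!bsumD /dualsum sumI_mk; apply: bsum_ext => f.
rewrite /PA /PB /PK /PL; case: (isInt g i f).
  rewrite !mulrDl mulr_suml; congr (_ + _); apply: eq_bigr => j _.
  rewrite big_bool /=; ring.
by rewrite big1 ?addr0.
Qed.

Lemma noM_N c j : coord c j = N g j -> inM g (nxt c j) = false.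
Proof.
move=> h; apply/negbTE/negP => /inM_bound/(_ j).
by rewrite coord_nxt eqxx h ltnNge leqnSn.
Qed.


Lemma M_lt c j : inM g c -> coord c j = N g j -> False.
Proof. by move=> /inM_bound/(_ j) h1 h2; rewrite h2 ltnn in h1. Qed.

Lemma PB_eq : bsum PB = bsum (fun K => if inM g K then X K * phi K else 0).
Proof.
apply: bsum_ext => f; rewrite /PB.
case hM: (inM g f); last first.
  by case hI: (isInt g i f) => //; rewrite (isInt_M hI) in hM.
case hI: (isInt g i f).
  rewrite /FdualI /sgn /= FK_false FK_true hM /X; ring.
by rewrite hphi ?mulr0 // bnd_M // hI.
Qed.

Lemma PA_eq : bsum PA = bsum (fun K => if inM g K then - (X K * phi (nxt K i)) else 0).
Proof.
pose H f := if (0 < coord f i)%N && inM g (prv f i) then - (X (prv f i) * phi f) else 0.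
transitivity (bsum H); last first.
  rewrite -(@bsum_shift i H).
  - by apply: bsum_ext => K; rewrite /H coord_nxt eqxx prv_nxt.
  - by move=> k hk; rewrite /H hk.
  - move=> k hk; rewrite /H prv_nxt; case hM: (inM g k) => //; last by rewrite andbF.
    by case: (M_lt hM hk).
apply: bsum_ext => f; rewrite /PA /H.
case h0: (0 < coord f i)%N; last by rewrite /isInt h0.
case hM: (inM g (prv f i)); last by rewrite /isInt h0 hM.
rewrite /=; move: (prv f i) (nxt_prv h0) hM => K <- hM.
rewrite isInt_nxt hM /=.
case hM2: (inM g (nxt K i)).
  rewrite /FdualI /sgn /= FK_false FK_true hM /X; ring.
by rewrite hphi ?mulr0 ?oppr0 // bnd_prvM ?coord_nxt ?eqxx ?prv_nxt ?isInt_nxt ?hM ?hM2.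
Qed.

Lemma Si_part : bsum PA + bsum PB = Si g rho u i phi.
Proof.
rewrite PA_eq PB_eq Si_eq addrC -bsumD; apply: bsum_ext => K.
by case: (inM g K) => //; rewrite ?addr0 // mulrBr.
Qed.

Section J.
Variable j : 'I_3.
Hypothesis hji : j != i.

Definition Q1 t := if isInt g j t then - (Z j t * (u i (prv t j) + u i t) * phi t) else 0.
Definition Q3 t := if isInt g j t then Z j t * (u i (prv t j) + u i t) * phi (prv t j) else 0.
Definition Q2 t := if isInt g j t then
  - (Z j t * (u i (nxt (prv t j) i) + u i (nxt t i)) * phi (nxt t i)) else 0.
Definition Q4 t := if isInt g j t then
  Z j t * (u i (nxt (prv t j) i) + u i (nxt t i)) * phi (nxt (prv t j) i) else 0.

Lemma isInt_N k : coord k j = N g j -> isInt g j (nxt k j) = false.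
Proof. by move=> hk; rewrite isInt_nxt noM_N // andbF. Qed.

Lemma isInt_0 k : coord k j = 0%N -> isInt g j k = false.
Proof. by move=> hk; rewrite /isInt hk. Qed.

Lemma P1 : bsum (PL j false) = bsum Q1.
Proof.
apply: bsum_ext => f; rewrite /PL /Q1 /nbr FK_false.
case hIi: (isInt g i f); case hIj: (isInt g j f) => //.
- rewrite (isInt_M hIi) /Z; by field.
- by rewrite (isInt_M hIi) (hu (bnd_M (isInt_M hIi) (negbT hIj))) !mulr0 oppr0 !mul0r.
- by rewrite hphi ?mulr0 ?oppr0 // bnd_M ?(isInt_M hIj) ?hIi.
Qed.

Lemma P3 : bsum (PL j true) = bsum Q3.
Proof.
rewrite -(@bsum_shift j Q3); first last.
- by move=> k hk; rewrite /Q3 isInt_N.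
- by move=> k hk; rewrite /Q3 isInt_0.
apply: bsum_ext => f; rewrite /PL /Q3 /nbr FK_true prv_nxt /Z area_nxt.
case hIi: (isInt g i f); case hIj: (isInt g j (nxt f j)) => //.
- rewrite (isInt_M hIi); by field.
- rewrite (isInt_M hIi) (hu (j:=j) (f:=nxt f j)) ?mulr0 ?mul0r //.
  by rewrite bnd_prvM ?coord_nxt ?eqxx ?prv_nxt ?(isInt_M hIi) ?hIj.
- move: hIj; rewrite isInt_nxt => /andP[hM _].
  by rewrite hphi ?mulr0 // bnd_M ?hIi.
Qed.

Lemma P2 : bsum (PK j false) = bsum Q2.
Proof.
pose H f := if (0 < coord f i)%N then Q2 (prv f i) else 0.
transitivity (bsum H); last first.
  rewrite -(@bsum_shift i H).
  - by apply: bsum_ext => K; rewrite /H coord_nxt eqxx prv_nxt.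
  - by move=> k hk; rewrite /H hk.
  - move=> k hk; rewrite /H prv_nxt coord_nxt eqxx /Q2.
    case hI: (isInt g j k) => //; by case: (M_lt (isInt_M hI) hk).
apply: bsum_ext => f; rewrite /PK /H /nbr.
case h0: (0 < coord f i)%N; last by rewrite /isInt h0.
rewrite /Q2; move: (prv f i) (nxt_prv h0) => c <-.
rewrite -nxt_prv_comm // FK_false isInt_nxt.
case hIj: (isInt g j c); case hM: (inM g c); case hM2: (inM g (nxt c i)) => //=.
- rewrite /Z; by field.
- by rewrite hphi ?mulr0 ?oppr0 // bnd_prvM ?coord_nxt ?eqxx ?prv_nxt ?isInt_nxt ?hM ?hM2.
- by rewrite (isInt_M hIj) in hM.
- by rewrite (isInt_M hIj) in hM.
- by rewrite (hu (bnd_M hM (negbT hIj))) !mulr0 oppr0 !mul0r.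
Qed.

Lemma P4 : bsum (PK j true) = bsum Q4.
Proof.
pose H f := if (0 < coord f i)%N then Q4 (nxt (prv f i) j) else 0.
transitivity (bsum H); last first.
  rewrite -(@bsum_shift j Q4); first last.
  - by move=> k hk; rewrite /Q4 isInt_N.
  - by move=> k hk; rewrite /Q4 isInt_0.
  rewrite -(@bsum_shift i H).
  - by apply: bsum_ext => K; rewrite /H coord_nxt eqxx prv_nxt.
  - by move=> k hk; rewrite /H hk.
  - move=> k hk; rewrite /H prv_nxt coord_nxt eqxx /Q4 isInt_nxt.
    case hM: (inM g k) => //=; by case: (M_lt hM hk).
apply: bsum_ext => f; rewrite /PK /H /nbr.
case h0: (0 < coord f i)%N; last by rewrite /isInt h0.
rewrite /Q4; move: (prv f i) (nxt_prv h0) => c <-.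
rewrite FK_true !isInt_nxt prv_nxt nxt_nxt_comm /Z area_nxt.
case hM: (inM g c); case hM2: (inM g (nxt c i)); case hM3: (inM g (nxt c j)) => //=.
- by field.
- rewrite (hu (j:=j) (f:=nxt c j)) ?mulr0 ?mul0r //.
  by rewrite bnd_prvM ?coord_nxt ?eqxx ?prv_nxt ?isInt_nxt ?hM ?hM3.
- by rewrite hphi ?mulr0 // bnd_prvM ?coord_nxt ?eqxx ?prv_nxt ?isInt_nxt ?hM ?hM2.
Qed.

Lemma Sj_part : bsum (PK j false) + bsum (PL j false) + bsum (PK j true) + bsum (PL j true)
  = Sj g rho u i phi j.
Proof.
rewrite P1 P2 P3 P4 Sj_eq // -!bsumD; apply: bsum_ext => t.
rewrite /Q1 /Q2 /Q3 /Q4; case: (isInt g j t); last by rewrite !addr0.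
ring.
Qed.

End J.

End Main.

Theorem lemma7p3 (R : realType) (g : MACgrid R) (rho : idx -> R)
  (u : 'I_3 -> idx -> R)
  (hu : forall (j : 'I_3) (f : idx), isBnd g j f -> u j f = 0)
  (i : 'I_3) (phi : idx -> R)
  (hphi : forall f : idx, isBnd g i f -> phi f = 0) :
  dualsum g rho u i phi = \sum_(j < 3) Sdir g rho u i phi j.
Proof.
rewrite (dualsum_eq g rho u i phi) (Si_part rho hu hphi) [RHS](bigD1 i) // /Sdir eqxx /=.
congr (_ + _); apply: eq_bigr => j hj; rewrite (negbTE hj).
exact: (Sj_part rho hu hphi hj).
Qed.
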